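(* Let $X$, $\mathcal{B}$, $\Delta$ and the Gelfand transform $f\mapsto\hat f$ be as in the context (in particular $\mathcal{B}$ vanishes nowhere on $X$), and let $\mathcal{B}_c:=\{\varphi\in\mathcal{B}:\hat\varphi\in C_c(\Delta)\}$, where $C_c(\Delta)$ denotes the continuous compactly supported functions on $\Delta$. Then $\mathcal{B}_c$ is dense in $\mathcal{B}$ with respect to the supremum norm.
   Context: $X$ is a nonempty set and $\mathcal{B}$ is a real vector space of bounded functions $X\to\mathbb{R}$ closed under pointwise multiplication, pointwise max and min, with $f\wedge1\in\mathcal{B}$ for $f\in\mathcal{B}$. Assume that for every $x\in X$ there is $f\in\mathcal{B}$ with $f(x)\neq0$. $A(\mathcal{B})$ is the supremum-norm closure of $\mathcal{B}+i\mathcal{B}$, a commutative $C^\ast$-algebra with pointwise operations and complex conjugation as involution; $\Delta$ is its spectrum (nonzero continuous multiplicative linear functionals with the Gelfand topology), locally compact Hausdorff; $\hat a(\varphi)=\varphi(a)$ is the Gelfand transform, an isometric $^\ast$-isomorphism $A(\mathcal{B})\to C_0(\Delta)$. *)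

(* Defs.v *)
From mathcomp Require Import all_boot all_order all_algebra.
From mathcomp Require Import all_classical all_reals all_analysis.
From mathcomp Require Import complex.
Import Order.TTheory GRing.Theory Num.Theory.
Import numFieldTopology.Exports numFieldNormedType.Exports.

Set Implicit Arguments.
Unset Strict Implicit.
Unset Printing Implicit Defensive.

Local Open Scope classical_set_scope.
Local Open Scope ring_scope.

(* The complex numbers over a real field R, as a numClosedFieldType
   (so that it carries its canonical metric topology). *)
Definition Cplx (R : realType) : numClosedFieldType := R[i].

Definition cpx (R : realType) (r : R) : Cplx R := (r%:C)%C.

Section GelfandDefs.
Variables (R : realType) (X : Type).

Definition bounded_real_fun (f : X -> R) : Prop := exists M : R, forall x, `|f x| <= M.

Definition AB (B : set (X -> R)) : set (X -> Cplx R) :=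
  [set h | forall e : R, 0 < e ->
     exists f g, [/\ B f, B g &
       forall x, `|h x - (cpx (f x) + 'i * cpx (g x))| <= cpx e]].

(* A functional is represented by a total map on all
   complex functions on X which is 0 outside A(B) (normalization, so that
   characters are in bijection with functionals on A(B)). *)
Definition is_character (B : set (X -> R)) (chi : (X -> Cplx R) -> Cplx R) : Prop :=
  [/\ forall a b (c : Cplx R), AB B a -> AB B b ->
        chi (fun x => c * a x + b x) = c * chi a + chi b,
      forall a b, AB B a -> AB B b ->
        chi (fun x => a x * b x) = chi a * chi b,
      exists2 a, AB B a & chi a != 0,
      exists K : R, forall a (M : R), AB B a -> (forall x, `|a x| <= cpx M) ->
        `|chi a| <= cpx (K * M)
    & forall a, ~ AB B a -> chi a = 0].

(* The ambient space of functionals with the topology of pointwise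
   convergence; its subspace topology on the spectrum is the Gelfand
   (weak-* ) topology. *)
Definition functionals := {ptws (X -> Cplx R) -> Cplx R}.

Definition spectrum (B : set (X -> R)) : set functionals :=
  [set chi | is_character B chi].

Definition gelfand (phi : X -> R) : functionals -> Cplx R :=
  fun chi => chi (fun x => cpx (phi x)).

(* support of the Gelfand transform, as a subset of Delta: the closure in
   Delta (= ambient closure intersected with Delta) of its nonvanishing set *)
Definition gelfand_support (B : set (X -> R)) (phi : X -> R) : set functionals :=
  spectrum B `&` closure [set chi | spectrum B chi /\ gelfand phi chi != 0].

Definition Bc (B : set (X -> R)) : set (X -> R) :=
  [set phi | [/\ B phi,
     {within spectrum B, continuous (gelfand phi)}
   & compact (gelfand_support B phi)]].

End GelfandDefs.

(* Main.v *)
Require Import Defs.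
Set Warnings "-all".
From mathcomp Require Import all_boot all_order all_algebra.
From mathcomp Require Import all_classical all_reals all_analysis.
From mathcomp Require Import complex.
From mathcomp Require Import ring lra.
Import Order.TTheory GRing.Theory Num.Theory.
Import numFieldTopology.Exports numFieldNormedType.Exports.
Local Open Scope classical_set_scope.
Local Open Scope ring_scope.
Set Implicit Arguments. Unset Strict Implicit.

Record Bax (R : realType) (X : Type) (B : set (X -> R)) : Prop := {
  B0 : B (fun _ => 0);
  BD : forall f g, B f -> B g -> B (fun x => f x + g x);
  BZ : forall (c : R) f, B f -> B (fun x => c * f x);
  Bbd : forall f, B f -> bounded_real_fun f;
  BM : forall f g, B f -> B g -> B (fun x => f x * g x);
  Bmax : forall f g, B f -> B g -> B (fun x => Num.max (f x) (g x));
  Bmin : forall f g, B f -> B g -> B (fun x => Num.min (f x) (g x));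
  Bmin1 : forall f, B f -> B (fun x => Num.min (f x) 1) }.

Lemma BB (R : realType) X (B : set (X -> R)) (hB : Bax B) f g :
  B f -> B g -> B (fun x => f x - g x).
Proof.
move=> Bf Bg; have := BD hB Bf (BZ hB (-1) Bg).
by congr B; apply: funext => x; rewrite mulN1r.
Qed.

Lemma Bminc (R : realType) X (B : set (X -> R)) (hB : Bax B) f (e : R) :
  0 < e -> B f -> B (fun x => Num.min (f x) e).
Proof.
move=> e0 Bf; have := BZ hB e (Bmin1 hB (BZ hB e^-1 Bf)).
congr B; apply: funext => x; rewrite minr_pMr ?ltW // mulr1 mulrA divff ?mul1r //.
by rewrite gt_eqF.
Qed.

Lemma mnl (R : realType) (x y : R) : x <= y -> Num.min x y = x.
Proof. by move=> h; apply/min_idPl. Qed.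
Lemma mnr (R : realType) (x y : R) : y <= x -> Num.min x y = y.
Proof. by move=> h; apply/min_idPr. Qed.
Lemma mxl (R : realType) (x y : R) : y <= x -> Num.max x y = x.
Proof. by move=> h; apply/max_idPl. Qed.
Lemma mxr (R : realType) (x y : R) : x <= y -> Num.max x y = y.
Proof. by move=> h; apply/max_idPr. Qed.

Lemma pointwise_clamp (R : realType) (y e : R) : 0 < e ->
  `|Num.max (Num.min y e) (- e)| <= e /\
  (y - Num.max (Num.min y e) (- e)) * Num.min (Num.max y (- y) * e^-1) 1 =
   y - Num.max (Num.min y e) (- e).
Proof.
move=> e0.
have [ye|ye] := leP y e; have [ye'|ye'] := leP (- e) y.
- rewrite subrr mul0r; split => //.
  by rewrite ler_norml ye ye'.
- split; first by rewrite normrN gtr0_norm.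
  have h1 : 1 <= Num.max y (- y) * e^-1.
    rewrite ler_pdivlMr // mul1r le_max; apply/orP; right.
    by rewrite lerNr ltW.
  by rewrite mnr // mulr1.
- have ee : - e <= e by lra.
  rewrite mxl //; split; first by rewrite gtr0_norm.
  have h1 : 1 <= Num.max y (- y) * e^-1.
    by rewrite ler_pdivlMr // mul1r le_max ltW.
  by rewrite mnr // mulr1.
- exfalso; lra.
Qed.
Section Cpx.
Variable R : realType.
Implicit Types (r s : R) (z : Cplx R).

Lemma cpxD r s : cpx (r + s) = cpx r + cpx s.
Proof. exact: (rmorphD (real_complex R)). Qed.
Lemma cpxM r s : cpx (r * s) = cpx r * cpx s.
Proof. exact: (rmorphM (real_complex R)). Qed.
Lemma cpxN r : cpx (- r) = - cpx r.
Proof. exact: (rmorphN (real_complex R)). Qed.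
Lemma cpxB r s : cpx (r - s) = cpx r - cpx s.
Proof. exact: (rmorphB (real_complex R)). Qed.
Lemma cpx0 : cpx (0 : R) = 0.
Proof. exact: (rmorph0 (real_complex R)). Qed.
Lemma cpx1 : cpx (1 : R) = 1.
Proof. exact: (rmorph1 (real_complex R)). Qed.
Lemma cpxX r n : cpx (r ^+ n) = cpx r ^+ n.
Proof. exact: (rmorphXn (real_complex R)). Qed.
Lemma cpx_le r s : (cpx r <= cpx s) = (r <= s).
Proof. exact: lecR. Qed.
Lemma cpx_leW r s : r <= s -> cpx r <= cpx s.
Proof. by rewrite cpx_le. Qed.
Lemma cpx_leW' r s : cpx r <= cpx s -> r <= s.
Proof. by rewrite cpx_le. Qed.
Lemma cpx_lt r s : (cpx r < cpx s) = (r < s).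
Proof. exact: ltcR. Qed.
Lemma cpx_inj r s : cpx r = cpx s -> r = s.
Proof. by case. Qed.
Lemma normcpx r : `|cpx r| = cpx `|r|.
Proof.
rewrite /cpx normc_def /=; congr (_%:C)%C.
by rewrite expr0n /= addr0 sqrtr_sqr.
Qed.
Lemma norm_cpxE z : `|z| = cpx (Num.sqrt (complex.Re z ^+ 2 + complex.Im z ^+ 2)).
Proof. by rewrite normc_def. Qed.
Lemma normc_real z : exists r, 0 <= r /\ `|z| = cpx r.
Proof. by eexists; split; last exact: norm_cpxE; apply: sqrtr_ge0. Qed.
Lemma cpx_ge0 r : (0 <= cpx r) = (0 <= r).
Proof. by rewrite -cpx0 cpx_le. Qed.
Lemma ii2 : ('i : Cplx R) * 'i = -1.
Proof. by rewrite -expr2 sqrCi. Qed.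
End Cpx.

Definition cf (R : realType) X (phi : X -> R) : X -> Cplx R := fun x => cpx (phi x).

Lemma AB_B (R : realType) X (B : set (X -> R)) (hB : Bax B) f :
  B f -> AB B (cf f).
Proof.
move=> Bf e e0; exists f, (fun _ => 0); split => //; first exact: B0 hB.
by move=> x; rewrite /cf cpx0 mulr0 addr0 subrr normr0 cpx_ge0 ltW.
Qed.

Lemma B_bnd (R : realType) X (B : set (X -> R)) (hB : Bax B) f :
  B f -> exists M, 0 <= M /\ forall x, `|f x| <= M.
Proof.
move=> /(Bbd hB) [M hM]; exists `|M|; split => // x.
exact: le_trans (hM x) (ler_norm _).
Qed.

Lemma AB_bnd (R : realType) X (B : set (X -> R)) (hB : Bax B) a :
  AB B a -> exists M, 0 <= M /\ forall x, `|a x| <= cpx M.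
Proof.
move=> /(_ 1 ltr01) [f [g [Bf Bg ha]]].
have [Mf [Mf0 hf]] := B_bnd hB Bf; have [Mg [Mg0 hg]] := B_bnd hB Bg.
exists (Mf + Mg + 1); split; first lra.
move=> x; have := ha x.
set p := (cpx (f x) + 'i * cpx (g x)) => hx.
have -> : a x = (a x - p) + p by rewrite subrK.
apply: le_trans (ler_normD _ _) _.
rewrite !cpxD addrC; apply: lerD; last by rewrite cpx1.
apply: le_trans (ler_normD _ _) _; rewrite normrM normCi mul1r !normcpx.
by apply: lerD; rewrite cpx_le.
Qed.

Lemma AB_mul (R : realType) X (B : set (X -> R)) (hB : Bax B) a b :
  AB B a -> AB B b -> AB B (fun x => a x * b x).
Proof.
move=> Aa Ab.
have [Ma [Ma0 ha]] := AB_bnd hB Aa; have [Mb [Mb0 hb]] := AB_bnd hB Ab.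
move=> e e0.
pose d := Num.min 1 (e / (Ma + Mb + 1)).
have d0 : 0 < d by rewrite lt_min ltr01 divr_gt0 //; lra.
have d1 : d <= 1 by rewrite ge_min lexx.
have d2 : d * (Ma + Mb + 1) <= e.
  rewrite -ler_pdivlMr; last lra.
  by rewrite ge_min lexx orbT.
have [f1 [g1 [Bf1 Bg1 h1]]] := Aa d d0.
have [f2 [g2 [Bf2 Bg2 h2]]] := Ab d d0.
exists (fun x => f1 x * f2 x - g1 x * g2 x), (fun x => f1 x * g2 x + g1 x * f2 x).
split.
- by apply: (BB hB); apply: (BM hB).
- by apply: (BD hB); apply: (BM hB).
move=> x.
set p := cpx (f1 x) + 'i * cpx (g1 x).
set q := cpx (f2 x) + 'i * cpx (g2 x).
have -> : cpx (f1 x * f2 x - g1 x * g2 x) + 'i * cpx (f1 x * g2 x + g1 x * f2 x)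
   = p * q.
  rewrite /p /q cpxB cpxD !cpxM.
  have := ii2 R; set I := 'i => hI.
  have -> : (cpx (f1 x) + I * cpx (g1 x)) * (cpx (f2 x) + I * cpx (g2 x)) =
    cpx (f1 x) * cpx (f2 x) + (I * I) * (cpx (g1 x) * cpx (g2 x)) +
    I * (cpx (f1 x) * cpx (g2 x) + cpx (g1 x) * cpx (f2 x)) by ring.
  rewrite hI; ring.
have -> : a x * b x - p * q = a x * (b x - q) + (a x - p) * q by ring.
apply: le_trans (ler_normD _ _) _; rewrite !normrM.
have hq : `|q| <= cpx Mb + cpx d.
  have -> : q = b x - (b x - q) by ring.
  by apply: le_trans (ler_normB _ _) _; apply: lerD.
apply: (@le_trans _ _ (cpx Ma * cpx d + cpx d * (cpx Mb + cpx d))).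
  apply: lerD; apply: ler_pM => //.
rewrite -(cpxD Mb d) -!cpxM -cpxD; apply: cpx_leW; nra.
Qed.

Lemma bern (R : realType) (h : R) n : 0 <= h -> 1 + n%:R * h <= (1 + h) ^+ n.
Proof.
move=> h0; elim: n => [|n IH]; first by rewrite mul0r addr0 expr0.
rewrite exprS.
have : (1 + h) * (1 + n%:R * h) <= (1 + h) * (1 + h) ^+ n.
  by apply: ler_pM => //; [lra | rewrite addr_ge0 // mulr_ge0]. 
apply: le_trans; rewrite mulrS.
have : 0 <= n%:R * h * h by rewrite !mulr_ge0.
lra.
Qed.

Lemma pow_bound (R : realType) (t M K : R) : 0 <= t -> 0 <= M ->
  (forall n, t ^+ n.+1 <= K * M ^+ n.+1) -> t <= M.
Proof.
move=> t0 M0 h.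
have [M00|Mpos] := eqVneq M 0.
  by subst M; have := h 0%N; rewrite !expr1 mulr0.
have {}Mpos : 0 < M by rewrite lt_def Mpos M0.
rewrite leNgt; apply/negP => tM.
pose q := t / M.
have q1 : 1 < q by rewrite /q ltr_pdivlMr // mul1r.
have hq n : q ^+ n.+1 <= K.
  have := h n; rewrite /q expr_div_n ler_pdivrMr ?exprn_gt0 //.
pose n := (Num.trunc (K / (q - 1))).+1.
have q10 : 0 < q - 1 by rewrite subr_gt0.
have := @bern _ (q - 1) n (ltW q10).
rewrite [1 + (q - 1)]addrC subrK => hb.
have hK : K / (q - 1) < n%:R by apply: truncnS_gt.
have : K < n%:R * (q - 1) by rewrite -ltr_pdivrMr // subr_gt0.
have : q ^+ n <= q ^+ n.+1.
  by rewrite exprS ler_peMl // ?exprn_ge0 // ltW // (lt_trans ltr01).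
have := hq n.
lra.
Qed.

Lemma AB_pow (R : realType) X (B : set (X -> R)) (hB : Bax B) a n :
  AB B a -> AB B (fun x => a x ^+ n.+1).
Proof.
move=> Aa; elim: n => [|n IH]; first by under eq_fun do rewrite expr1.
by under eq_fun do rewrite exprS; apply: AB_mul.
Qed.

Lemma chi_pow (R : realType) X (B : set (X -> R)) (hB : Bax B) chi a n :
  is_character B chi -> AB B a -> chi (fun x => a x ^+ n.+1) = chi a ^+ n.+1.
Proof.
case=> _ hM _ _ _ Aa; elim: n => [|n IH].
  by rewrite expr1; under eq_fun do rewrite expr1.
under eq_fun do rewrite exprS.
by rewrite hM ?IH ?exprS //; apply: AB_pow.
Qed.

Lemma chi_norm (R : realType) X (B : set (X -> R)) (hB : Bax B) chi a (M : R) :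
  inhabited X -> is_character B chi -> AB B a ->
  (forall x, `|a x| <= cpx M) -> `|chi a| <= cpx M.
Proof.
move=> [x0] hchi Aa ha.
have M0 : 0 <= M by apply: cpx_leW'; rewrite cpx0; apply: le_trans (ha x0).
have [t [t0 ht]] := normc_real (chi a).
rewrite ht; apply: cpx_leW.
case: (hchi) => _ _ _ [K hK] _.
apply: (@pow_bound _ t M K) => // n.
have := hK _ (M ^+ n.+1) (@AB_pow _ _ _ hB _ n Aa).
rewrite (@chi_pow _ _ _ hB chi a n hchi Aa) normrX ht -cpxX => H; apply: cpx_leW'; apply: H => x.
rewrite normrX cpxX; apply: lerXn2r; rewrite ?nnegrE ?normr_ge0 ?cpx_ge0 ?ha //.
Qed.

Lemma closed_normle (K : numFieldType) (m : K) : m \is Num.real ->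
  closed [set z : K | `|z| <= m].
Proof.
move=> mr p clp; apply/negPn/negP => hp.
have lt : m < `|p| by rewrite real_ltNge // realE normr_ge0 orbT.
have := clp (ball p (`|p| - m)) (nbhsx_ballx _ _ _).
rewrite subr_gt0 => /(_ lt) [z [/= hz hpz]].
move: hpz; rewrite -ball_normE /= => hpz.
have : `|p| <= `|z| + `|p - z|.
  by rewrite -[X in `|X| <= _](subrK z) addrC (ler_normD z (p - z)).
have h3 : `|z| + `|p - z| < m + (`|p| - m) by apply: ler_ltD.
rewrite [m + _]addrC subrK in h3.
by move=> /le_lt_trans /(_ h3); rewrite ltxx.
Qed.

Lemma closed_eqF (T : topologicalType) (K : numFieldType) (F G : T -> K) :
  continuous F -> continuous G -> closed [set x | F x = G x].
Proof.
move=> cF cG.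
have -> : [set x | F x = G x] = (fun x => F x - G x) @^-1` [set z : K | `|z| <= 0].
  apply/seteqP; split => x /=.
    by move=> ->; rewrite subrr normr0.
  by rewrite normr_le0 subr_eq0 => /eqP.
have cFG : continuous (fun x => F x - G x).
  by move=> x; apply: cvgB; [exact: cF | exact: cG].
by move/continuous_closedP: cFG; apply; exact: closed_normle.
Qed.

Lemma closed_forall (T : topologicalType) (I : Type) (P : I -> T -> Prop) :
  (forall i, closed [set x | P i x]) -> closed [set x | forall i, P i x].
Proof.
move=> h.
have -> : [set x | forall i, P i x] = \bigcap_(i in [set: I]) [set x | P i x].
  apply/seteqP; split => x /= hx.
    by move=> i _; exact: hx.
  by move=> i; exact: (hx i Logic.I).
exact: closed_bigI (fun i _ => h i).
Qed.

Lemma closed_imp (T : topologicalType) (Q : Prop) (P : T -> Prop) :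
  (Q -> closed [set x | P x]) -> closed [set x | Q -> P x].
Proof.
move=> h; have [q|nq] := pselect Q.
  have -> : [set x | Q -> P x] = [set x | P x].
    by apply/seteqP; split => x /= hx //; apply: hx.
  exact: h.
have -> : [set x | Q -> P x] = setT by apply/seteqP; split => x //= _ /nq.
exact: closedT.
Qed.

Lemma ev_cont (R : realType) X (a : X -> Cplx R) :
  continuous (fun chi : functionals R X => chi a).
Proof. exact: (@proj_continuous (X -> Cplx R) (fun _ => Cplx R) a). Qed.

Lemma cpx_ltW (R : realType) (r s : R) : r < s -> cpx r < cpx s.
Proof. by rewrite cpx_lt. Qed.

Lemma pos_cpx (R : realType) (e : Cplx R) : 0 < e -> exists r, 0 < r /\ e = cpx r.
Proof.
move=> e0; move: (e0); rewrite ltcE /= => /andP [/eqP hI hR].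
exists (complex.Re e); split => //.
by case: e e0 hI hR => a b /= _ -> _.
Qed.

Lemma cpx_cont (R : realType) : continuous (@cpx R).
Proof.
move=> x; apply/cvgrPdist_lt => eps /pos_cpx [r [r0 ->]].
near=> y; rewrite -cpxB normcpx; apply: cpx_ltW.
near: y; exact: (nbhsx_ballx x r r0).
Unshelve. all: by end_near.
Qed.

Definition gmap (R : realType) (p : R * R) : Cplx R := cpx p.1 + 'i * cpx p.2.

Lemma gmap_cont (R : realType) : continuous (@gmap R).
Proof.
move=> p.
have c1 : {for p, continuous (fun q : R * R => cpx q.1)}.
  apply: (@continuous_comp _ _ _ fst (@cpx R)); last exact: cpx_cont.
  exact: cvg_fst.
have c2 : {for p, continuous (fun q : R * R => cpx q.2)}.
  apply: (@continuous_comp _ _ _ snd (@cpx R)); last exact: cpx_cont.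
  exact: cvg_snd.
apply: cvgD; first exact: c1.
apply: cvgM; first exact: cvg_cst.
exact: c2.
Qed.

Definition Dset (R : realType) (r : R) : set (Cplx R) :=
  (@gmap R) @` (closed_ball (0:R) (r + 1) `*` closed_ball (0:R) (r + 1)).

Lemma Dset_compact (R : realType) (r : R) : 0 <= r -> compact (Dset r).
Proof.
move=> r0; apply: continuous_compact.
  exact: continuous_subspaceT (@gmap_cont R).
apply: compact_setX; apply: closed_ballR_compact; lra.
Qed.

Lemma Dset_mem (R : realType) (r : R) (z : Cplx R) : 0 <= r -> `|z| <= cpx r -> Dset r z.
Proof.
move=> r0 hz.
have hb u : `|u| <= r -> closed_ball (0:R) (r + 1) u.
  move=> hu; rewrite closed_ballE; last lra.
  rewrite /closed_ball_ /= distrC subr0; lra.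
exists (complex.Re z, complex.Im z).
  split; apply: hb.
  - apply: cpx_leW'; apply: le_trans hz; exact: normc_ge_Re.
  - apply: cpx_leW'; apply: le_trans hz.
    rewrite -normrN -ReiNIm.
    by apply: le_trans (normc_ge_Re _) _; rewrite normrM normCi mulr1.
rewrite /gmap /= /cpx -complexiE.
by rewrite [RHS]complexE mulrC.
Qed.

Lemma oppmin (R : realType) (u e : R) : - Num.min (- u) e = Num.max u (- e).
Proof.
have [h1|h1] := leP (- u) e; have [h2|h2] := leP u (- e); lra.
Qed.

Definition bnd (R : realType) X (a : X -> Cplx R) : R :=
  if pselect (exists M, 0 <= M /\ forall x, `|a x| <= cpx M) is left h
  then sval (cid h) else 0.

Lemma bnd_ge0 (R : realType) X (a : X -> Cplx R) : 0 <= bnd a.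
Proof. by rewrite /bnd; case: pselect => // h; case: cid => M [] /=. Qed.

Lemma bnd_spec (R : realType) X (a : X -> Cplx R) :
  (exists M, 0 <= M /\ forall x, `|a x| <= cpx M) -> forall x, `|a x| <= cpx (bnd a).
Proof. by rewrite /bnd; case: pselect => // h _; case: cid => M [] /=. Qed.

Definition Tset (R : realType) X (B : set (X -> R)) (w : X -> Cplx R) : set (functionals R X) :=
  [set chi : functionals R X | forall a b c, AB B a -> AB B b ->
      chi (fun x => c * a x + b x) = c * chi a + chi b]
  `&` [set chi | forall a b, AB B a -> AB B b ->
      chi (fun x => a x * b x) = chi a * chi b]
  `&` [set chi | chi w = 1]
  `&` [set chi | forall a (M : R), AB B a -> (forall x, `|a x| <= cpx M) ->
      `|chi a| <= cpx M]
  `&` [set chi | forall a, ~ AB B a -> chi a = 0].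

Lemma Tset_closed (R : realType) X (B : set (X -> R)) w : closed (Tset B w).
Proof.
have ev := @ev_cont R X.
apply: closedI; [apply: closedI; [apply: closedI; [apply: closedI|]|]|].
- apply: closed_forall => a; apply: closed_forall => b; apply: closed_forall => c.
  apply: closed_imp => _; apply: closed_imp => _.
  apply: (@closed_eqF _ _ (fun chi : functionals R X => chi (fun x => c * a x + b x))
     (fun chi : functionals R X => c * chi a + chi b)); first exact: ev.
  move=> chi; apply: (continuousD _ (ev b chi)).
  exact: (continuousM (@cst_continuous _ _ c chi) (ev a chi)).
- apply: closed_forall => a; apply: closed_forall => b.
  apply: closed_imp => _; apply: closed_imp => _.
  apply: (@closed_eqF _ _ (fun chi : functionals R X => chi (fun x => a x * b x))
     (fun chi : functionals R X => chi a * chi b)); first exact: ev.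
  move=> chi; exact: (continuousM (ev a chi) (ev b chi)).
- apply: (@closed_eqF _ _ (fun chi : functionals R X => chi w) (fun _ => 1)).
    exact: ev.
  exact: cst_continuous.
- apply: closed_forall => a; apply: closed_forall => M.
  apply: closed_imp => _; apply: closed_imp => _.
  have hM : cpx M \is Num.real by apply/complex_realP; exists M.
  exact: ((continuous_closedP (fun chi : functionals R X => chi a)).1 (ev a) _
            (closed_normle hM)).
- apply: closed_forall => a; apply: closed_imp => _.
  apply: (@closed_eqF _ _ (fun chi : functionals R X => chi a) (fun _ => 0)).
    exact: ev.
  exact: cst_continuous.
Qed.
Lemma Tset_spec (R : realType) X (B : set (X -> R)) w :
  AB B w -> Tset B w `<=` spectrum B.
Proof.
move=> Aw chi [[[[hL hM] hW] hN] hZ]; split => //.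
- by exists w => //; rewrite hW oner_neq0.
- exists 1 => a M Aa ha; rewrite mul1r; exact: hN.
Qed.

Lemma Tset_compact (R : realType) X (B : set (X -> R)) (hB : Bax B) w :
  compact (Tset B w).
Proof.
pose P : set (functionals R X) := [set chi | forall a, Dset (bnd a) (chi a)].
have cP : compact P.
  exact: (@tychonoff (X -> Cplx R) (fun _ => Cplx R) (fun a => Dset (bnd a))
           (fun a => Dset_compact (bnd_ge0 a))).
apply: (@subclosed_compact _ _ P (@Tset_closed _ _ B w) cP).
move=> chi [[[[hL hM] hW] hN] hZ] a /=; apply: Dset_mem; first exact: bnd_ge0.
have [Aa|nAa] := pselect (AB B a).
  by apply: hN => //; apply: bnd_spec; exact: (AB_bnd hB Aa).
by rewrite hZ // normr0 cpx_ge0 bnd_ge0.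
Qed.

Unset Implicit Arguments.

Theorem mainTheorem7 (R : realType) (X : Type) (B : set (X -> R)) :
  inhabited X ->
  B (fun _ => 0) ->
  (forall f g, B f -> B g -> B (fun x => f x + g x)) ->
  (forall (c : R) f, B f -> B (fun x => c * f x)) ->
  (forall f, B f -> bounded_real_fun f) ->
  (forall f g, B f -> B g -> B (fun x => f x * g x)) ->
  (forall f g, B f -> B g -> B (fun x => Num.max (f x) (g x))) ->
  (forall f g, B f -> B g -> B (fun x => Num.min (f x) (g x))) ->
  (forall f, B f -> B (fun x => Num.min (f x) 1)) ->
  (forall x, exists2 f, B f & f x != 0) ->
  forall f, B f -> forall e : R, 0 < e ->
    exists2 phi, Bc B phi & forall x, `|f x - phi x| <= e.
Proof.
move=> inhX h0 hD hZ hbd hM hmax hmin hmin1 _ f Bf e e0.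
have hB : Bax B by split.
pose h := fun x => Num.max (Num.min (f x) e) (- e).
have Bh : B h.
  have := BZ hB (-1) (Bminc hB e0 (BZ hB (-1) (Bminc hB e0 Bf))).
  by congr B; apply: funext => x; rewrite /h !mulN1r oppmin.
pose phi := fun x => f x - h x.
have Bphi : B phi by apply: BB.
pose w := fun x => Num.min (Num.max (f x) (- f x) * e^-1) 1.
have Bw : B w.
  have := Bmin1 hB (BZ hB e^-1 (Bmax hB Bf (BZ hB (-1) Bf))).
  by congr B; apply: funext => x; rewrite /w mulN1r mulrC.
have pw x : phi x * w x = phi x by have [_ ->] := pointwise_clamp (f x) e0.
exists phi; last first.
  by move=> x; rewrite /phi opprB addrC subrK; have [-> _] := pointwise_clamp (f x) e0.
pose cphi := cf phi; pose cw := cf w.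
have Aphi : AB B cphi by apply: AB_B.
have Aw : AB B cw by apply: AB_B.
split => //.
  apply: continuous_subspaceT; exact: (@ev_cont _ _ cphi).
pose A := [set chi | spectrum B chi /\ gelfand phi chi != 0].
have AT : A `<=` Tset B cw.
  move=> chi [hchi hne]; have hchi' := hchi.
  case: hchi' => hL hMul _ _ hZ0.
  split; [split; [split; [split|]|]|] => //.
  - have := hMul _ _ Aphi Aw.
    have -> : (fun x => cphi x * cw x) = cphi.
      by apply: funext => x; rewrite /cphi /cw /cf -cpxM pw.
    move: hne; rewrite /gelfand -/(cf phi) -/cphi => hne.
    move/eqP; rewrite -subr_eq0 -{1}[chi cphi]mulr1 -mulrBr mulf_eq0 (negbTE hne) /=.
    by rewrite subr_eq0 => /eqP ->.
  - by move=> a M Aa ha; apply: (chi_norm hB inhX hchi Aa ha).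
have cT : closed (Tset B cw) := @Tset_closed _ _ B cw.
have clA : closure A `<=` Tset B cw.
  move=> chi hc; have := closureS AT hc; by rewrite -((closure_id (Tset B cw)).1 cT).
have -> : gelfand_support B phi = closure A.
  apply/seteqP; split => chi; first by case.
  by move=> hc; split => //; apply: (Tset_spec Aw); exact: clA.
exact: (@subclosed_compact _ (closure A) (Tset B cw) (@closed_closure _ A)
  (@Tset_compact _ _ B hB cw) clA).
Qed.
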